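(* Let $P$ be a convex point set in the plane and let $\vec d_1$ be a directed straight line not orthogonal to any line through two points of $P$. Then there exists a directed straight line $\vec d_2$, not orthogonal to any line through two points of $P$ and such that the clockwise rotation bringing $\vec d_1$ to coincide with $\vec d_2$ is at most $180^\circ$, for which the $(\vec d_1,\vec d_2)$-partition of $P$ is balanced.
   Context: A convex point set is a finite point set in the plane in which no point is a convex combination of the others; $\mathcal H_P$ denotes its convex hull. For a directed line $\vec d$ not orthogonal to any line through two points of $P$, order the points of $P$ by their orthogonal projections on $\vec d$; let $p_a(\vec d)$ and $p_b(\vec d)$ be the first (minimum) and last (maximum) point. Let $P_1(\vec d)$ be the set of points of $P$ encountered when walking clockwise along the boundary of $\mathcal H_P$ from $p_a(\vec d)$ to $p_b(\vec d)$, including $p_a(\vec d)$ and excluding $p_b(\vec d)$; let $P_2(\vec d)$ be the set of points encountered walking clockwise from $p_b(\vec d)$ to $p_a(\vec d)$, including $p_b(\vec d)$ and excluding $p_a(\vec d)$. For two such directed lines $\vec d_1,\vec d_2$ with the clockwise rotation bringing $\vec d_1$ to $\vec d_2$ at most $180^\circ$, the $(\vec d_1,\vec d_2)$-partition of $P$ consists of $P_a=P_1(\vec d_1)\cap P_1(\vec d_2)$, $P_b=P_1(\vec d_1)\cap P_2(\vec d_2)$, $P_c=P_2(\vec d_1)\cap P_1(\vec d_2)$, $P_d=P_2(\vec d_1)\cap P_2(\vec d_2)$. It is balanced if $|P_a|+|P_d|\le \frac{|P|}{2}+1$ and $|P_b|+|P_c|\le\frac{|P|}{2}+1$. *)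

(* Defs.v *)
From HB Require Import structures.
From mathcomp Require Import all_boot all_order all_algebra.
From mathcomp Require Import all_classical all_reals all_analysis.
Set Implicit Arguments. Unset Strict Implicit. Unset Printing Implicit Defensive.
Import Order.TTheory GRing.Theory Num.Theory.
Local Open Scope ring_scope.

(* Points of the plane and directions are pairs (x, y) : R * R,
   with the usual orientation (x to the right, y upward). *)

Section Defs.
Variable R : realType.
Notation pt := (R * R)%type.

Definition dotp (u v : pt) : R := u.1 * v.1 + u.2 * v.2.
Definition subp (u v : pt) : pt := (u.1 - v.1, u.2 - v.2).
(* orientation of (p, q, r): > 0 iff r is strictly left of the directed line p -> q *)
Definition orient (p q r : pt) : R :=
  (q.1 - p.1) * (r.2 - p.2) - (q.2 - p.2) * (r.1 - p.1).

Definition convex_point_set (P : seq pt) : Prop :=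
  uniq P /\
  forall p, p \in P -> ~ exists w : pt -> R,
     (forall q, 0 <= w q) /\
     \sum_(q <- P | q != p) w q = 1 /\
     \sum_(q <- P | q != p) w q * q.1 = p.1 /\
     \sum_(q <- P | q != p) w q * q.2 = p.2.

(* A directed line is represented by its (nonzero) direction vector d;
   its position is irrelevant for orthogonal projections order.
   It is not orthogonal to any line through two points of P. *)
Definition generic_dir (P : seq pt) (d : pt) : Prop :=
  d != (0, 0) /\
  forall p q, p \in P -> q \in P -> p != q -> dotp d (subp q p) != 0.

Definition minpt (d : pt) (P : seq pt) : pt :=
  if P is x :: P' then
    foldl (fun m y => if dotp d y < dotp d m then y else m) x P'
  else (0, 0).
Definition maxpt (d : pt) (P : seq pt) : pt :=
  if P is x :: P' then
    foldl (fun m y => if dotp d m < dotp d y then y else m) x P'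
  else (0, 0).

(* s lists the vertices of the convex hull of P in clockwise order:
   s is a permutation of P and for every (cyclically) consecutive pair
   (s_i, s_{i+1}) all other points lie strictly to the right of the
   directed segment s_i -> s_{i+1} (i.e. it is a hull edge traversed
   with the interior on its right). *)
Definition cw_boundary (P s : seq pt) : Prop :=
  perm_eq s P /\
  forall i, (i < size s)%N ->
    forall x, x \in s -> x != nth (0, 0) s i ->
      x != nth (0, 0) s (i.+1 %% size s) ->
      orient (nth (0, 0) s i) (nth (0, 0) s (i.+1 %% size s)) x < 0.

(* points met walking along s (cyclically) from a (included) to b (excluded) *)
Definition arc (s : seq pt) (a b : pt) : seq pt :=
  let s' := rot (index a s) s in take (index b s') s'.

Definition P1 (s : seq pt) (d : pt) : seq pt := arc s (minpt d s) (maxpt d s).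
Definition P2 (s : seq pt) (d : pt) : seq pt := arc s (maxpt d s) (minpt d s).

Definition cw_rotation_le_pi (d1 d2 : pt) : Prop :=
  exists theta : R, 0 <= theta <= pi /\
    exists k : R, 0 < k /\
      d2 = (k * (d1.1 * cos theta + d1.2 * sin theta),
            k * (- d1.1 * sin theta + d1.2 * cos theta)).

Definition part_a (P s : seq pt) d1 d2 := [seq x <- P | (x \in P1 s d1) && (x \in P1 s d2)].
Definition part_b (P s : seq pt) d1 d2 := [seq x <- P | (x \in P1 s d1) && (x \in P2 s d2)].
Definition part_c (P s : seq pt) d1 d2 := [seq x <- P | (x \in P2 s d1) && (x \in P1 s d2)].
Definition part_d (P s : seq pt) d1 d2 := [seq x <- P | (x \in P2 s d1) && (x \in P2 s d2)].

Definition balanced (P s : seq pt) (d1 d2 : pt) : Prop :=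
  ((size (part_a P s d1 d2) + size (part_d P s d1 d2))%:R
     <= (size P)%:R / 2 + 1 :> R) /\
  ((size (part_b P s d1 d2) + size (part_c P s d1 d2))%:R
     <= (size P)%:R / 2 + 1 :> R).

End Defs.

(* Main.v *)
Require Import Defs.
From HB Require Import structures.
From mathcomp Require Import all_boot all_order all_algebra.
From mathcomp Require Import all_classical all_reals all_analysis.
From mathcomp Require Import zify ring lra.
Import Order.TTheory GRing.Theory Num.Theory.
Local Open Scope ring_scope.
Set Implicit Arguments. Unset Strict Implicit.

Lemma nth_rot_mod (T : Type) (x0 : T) (s : seq T) k j :
  (k <= size s)%N -> (j < size s)%N ->
  nth x0 (rot k s) j = nth x0 s ((k + j) %% size s).
Proof.
move=> hk hj; rewrite /rot nth_cat size_drop.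
case: ltnP => h.
  rewrite nth_drop modn_small //; lia.
rewrite nth_take; last by lia.
congr nth.
have -> : (k + j = (k + j - size s) + size s)%N by lia.
rewrite modnDr modn_small; lia.
Qed.

Lemma modS_cases i n : (i < n)%N -> (i.+1 %% n = if i.+1 == n then 0 else i.+1)%N.
Proof.
move=> h; case: eqP => [->|ne]; first by rewrite modnn.
by rewrite modn_small //; lia.
Qed.

Definition nxt (T : eqType) (x0 : T) (s : seq T) (x : T) : T :=
  nth x0 s ((index x s).+1 %% size s).

Lemma nxt_mem (T : eqType) (x0 : T) (s : seq T) x : x \in s -> nxt x0 s x \in s.
Proof.
move=> hx; rewrite /nxt mem_nth // ltn_mod.
by case: s hx.
Qed.

Lemma index_nxt (T : eqType) (x0 : T) (s : seq T) x : uniq s -> x \in s ->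
  index (nxt x0 s x) s = ((index x s).+1 %% size s)%N.
Proof.
move=> u hx; rewrite /nxt index_uniq // ltn_mod; by case: s hx u.
Qed.

Lemma nxt_neq (T : eqType) (x0 : T) (s : seq T) x : uniq s -> x \in s ->
  (2 <= size s)%N -> nxt x0 s x != x.
Proof.
move=> u hx h2; apply/negP => /eqP e.
have := index_nxt x0 u hx; rewrite e.
have := hx; rewrite -index_mem => hi.
rewrite modS_cases //; case: eqP; lia.
Qed.

Lemma nxt2_neq (T : eqType) (x0 : T) (s : seq T) x : uniq s -> x \in s ->
  (3 <= size s)%N -> nxt x0 s (nxt x0 s x) != x.
Proof.
move=> u hx h2; apply/negP => /eqP e.
have := index_nxt x0 u (nxt_mem x0 hx); rewrite e index_nxt //.
have := hx; rewrite -index_mem => hi.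
rewrite (modS_cases hi); case: eqP => h1.
  rewrite modn_small; lia.
rewrite modS_cases; last by lia.
case: eqP; lia.
Qed.

Lemma nxt_rot (T : eqType) (x0 : T) (s : seq T) k j : uniq s -> (k < size s)%N ->
  (j.+1 < size s)%N -> nxt x0 s (nth x0 (rot k s) j) = nth x0 (rot k s) j.+1.
Proof.
move=> u hk hj.
rewrite !nth_rot_mod //; try lia.
rewrite /nxt index_uniq //; last by rewrite ltn_mod; lia.
congr nth.
rewrite -addn1 modnDml; congr modn; lia.
Qed.


Lemma foldl_min (R : realType) (T : eqType) (g : T -> R) (x : T) (s : seq T) :
  let m := foldl (fun m y => if g y < g m then y else m) x s in
  m \in x :: s /\ forall y, y \in x :: s -> g m <= g y.
Proof.
elim: s x => [|a s IH] x /=.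
  by split; [rewrite mem_seq1|move=> y; rewrite mem_seq1 => /eqP->].
case: ifP => h.
  have [h1 h2] := IH a; split.
    by move: h1; rewrite !inE => /orP[->|->]; rewrite ?orbT.
  move=> y; rewrite !inE => /or3P[/eqP->||].
  - apply: le_trans (h2 a _) _; [by rewrite mem_head| exact: ltW].
  - by move=> /eqP->; apply: h2; rewrite mem_head.
  - by move=> hy; apply: h2; rewrite inE hy orbT.
have [h1 h2] := IH x; split.
  by move: h1; rewrite !inE => /orP[->|->]; rewrite ?orbT.
move=> y; rewrite !inE => /or3P[/eqP->||].
- by apply: h2; rewrite mem_head.
- move=> /eqP->; apply: le_trans (h2 x _) _; first by rewrite mem_head.
  by rewrite leNgt h.
- by move=> hy; apply: h2; rewrite inE hy orbT.
Qed.

Lemma minpt_spec (R : realType) (d : R * R) (s : seq (R * R)) : s != [::] ->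
  minpt d s \in s /\ forall y, y \in s -> dotp d (minpt d s) <= dotp d y.
Proof. by case: s => // a s _; exact: (foldl_min (dotp d) a s). Qed.

Lemma maxpt_spec (R : realType) (d : R * R) (s : seq (R * R)) : s != [::] ->
  maxpt d s \in s /\ forall y, y \in s -> dotp d y <= dotp d (maxpt d s).
Proof.
case: s => // a s _.
have := foldl_min (fun y => - dotp d y) a s => /=.
have -> : (fun m y => if - dotp d y < - dotp d m then y else m) =
  (fun m y => if dotp d m < dotp d y then y else m).
  by apply: funext => m; apply: funext => y; rewrite ltrN2.
move=> [h1 h2]; split => // y hy; have := h2 y hy; by rewrite lerN2.
Qed.


Lemma arc_up (R : realType) (s : seq (R * R)) (f : R * R -> R) a b :
  uniq s -> a \in s -> b \in s ->
  (forall y, y \in s -> f a <= f y) ->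
  (forall x y, x \in s -> y \in s -> x != y -> f x != f y) ->
  (forall u, u \in s -> f u < f (nxt (0,0) s u) ->
     f (nxt (0,0) s (nxt (0,0) s u)) < f (nxt (0,0) s u) -> nxt (0,0) s u = b) ->
  forall x, x \in arc s a b -> f x < f (nxt (0,0) s x).
Proof.
move=> u ha hb hmin hinj hloc x.
rewrite /arc.
set s' := rot (index a s) s.
have us' : uniq s' by rewrite rot_uniq.
have ss' : size s' = size s by rewrite size_rot.
have ia : (index a s < size s)%N by rewrite index_mem.
have hk : (index b s' < size s)%N by rewrite -ss' index_mem mem_rot.
have mem' : forall j, (j < size s)%N -> nth (0,0) s' j \in s.
  by move=> j hj; rewrite -(mem_rot (index a s)) mem_nth // ss'.
have nxt' : forall j, (j.+1 < size s)%N -> nxt (0,0) s (nth (0,0) s' j) = nth (0,0) s' j.+1.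
  by move=> j hj; rewrite /s' nxt_rot.
have neq' : forall j, (j.+1 < size s)%N -> nth (0,0) s' j != nth (0,0) s' j.+1.
  move=> j hj; rewrite nth_uniq // ?ss'; lia.
have claim : forall j, (j < index b s')%N ->
    f (nth (0,0) s' j) < f (nth (0,0) s' j.+1).
  have hma : nth (0,0) s' 0 = a.
    rewrite /s' nth_rot_mod ?addn0 ?modn_small ?nth_index //; [exact: ltnW ia | exact: leq_ltn_trans (leq0n _) ia].
  elim=> [|j IH] hj.
    rewrite hma lt_neqAle hmin ?andbT; last by apply: mem'; lia.
    rewrite hinj //; first by apply: mem'; lia.
    by rewrite -{1}hma; apply: neq'; lia.
  have IH' := IH (ltnW hj).
  rewrite lt_neqAle; apply/andP; split; last first.
    rewrite leNgt; apply/negP => hlt.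
    have := hloc (nth (0,0) s' j) (mem' j (ltn_trans (ltnW hj) hk)).
    rewrite !nxt' //; try lia.
    move=> /(_ IH' hlt) hb'.
    have : index b s' = j.+1.
      by rewrite -hb' index_uniq // ss'; exact: (leq_trans hj (ltnW hk)).
    by move=> e; move: hj; rewrite e ltnn.
  apply: hinj; try (apply: mem'; lia).
  by apply: neq'; lia.
move=> hx.
have hsz : size (take (index b s') s') = index b s' by rewrite size_take ss' hk.
have hi : (index x (take (index b s') s') < index b s')%N by rewrite -{2}hsz index_mem.
rewrite -(nth_index (0,0) hx) nth_take // nxt' //; last exact: leq_ltn_trans hi hk.
exact: claim.
Qed.


Lemma cone (R : realFieldType) (u1 u2 v1 v2 w1 w2 y1 y2 d1 d2 : R) :
  (v1 - u1) * (y2 - u2) - (v2 - u2) * (y1 - u1) < 0 ->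
  (w1 - v1) * (y2 - v2) - (w2 - v2) * (y1 - v1) < 0 ->
  (v1 - u1) * (w2 - u2) - (v2 - u2) * (w1 - u1) < 0 ->
  d1 * u1 + d2 * u2 < d1 * v1 + d2 * v2 ->
  d1 * w1 + d2 * w2 < d1 * v1 + d2 * v2 ->
  d1 * y1 + d2 * y2 <= d1 * v1 + d2 * v2.
Proof.
move=> H1 H2 H3 H4 H5.
set a1 := u1 - v1; set a2 := u2 - v2; set b1 := w1 - v1; set b2 := w2 - v2.
set x1 := y1 - v1; set x2 := y2 - v2.
have ca : a1 * x2 - a2 * x1 > 0 by rewrite /a1 /a2 /x1 /x2; nra.
have cb : b1 * x2 - b2 * x1 < 0 by rewrite /b1 /b2 /x1 /x2; nra.
have cab : a1 * b2 - a2 * b1 > 0 by rewrite /a1 /a2 /b1 /b2; nra.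
have da : d1 * a1 + d2 * a2 < 0 by rewrite /a1 /a2; lra.
have db : d1 * b1 + d2 * b2 < 0 by rewrite /b1 /b2; lra.
have id : (a1 * b2 - a2 * b1) * (d1 * x1 + d2 * x2) =
  (x1 * b2 - x2 * b1) * (d1 * a1 + d2 * a2) + (a1 * x2 - a2 * x1) * (d1 * b1 + d2 * b2) by ring.
have : d1 * x1 + d2 * x2 < 0.
  have : (a1 * b2 - a2 * b1) * (d1 * x1 + d2 * x2) < 0.
    rewrite id; nra.
  nra.
rewrite /x1 /x2; lra.
Qed.
Lemma par2 (R : realFieldType) (y1 y2 n1 n2 p1 p2 q1 q2 z1 z2 w1 w2 d1 d2 : R) :
  0 < d1 ^+ 2 + d2 ^+ 2 ->
  d1 * (n1 - y1) + d2 * (n2 - y2) = 0 ->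
  d1 * (q1 - p1) + d2 * (q2 - p2) = 0 ->
  d1 * (z1 - y1) + d2 * (z2 - y2) = 0 ->
  d1 * (w1 - p1) + d2 * (w2 - p2) = 0 ->
  (n1 - y1) * (w2 - y2) - (n2 - y2) * (w1 - y1) < 0 ->
  (q1 - p1) * (z2 - p2) - (q2 - p2) * (z1 - p1) < 0 ->
  ((n1 - y1) * d2 - (n2 - y2) * d1) * ((q1 - p1) * d2 - (q2 - p2) * d1) < 0.
Proof.
move=> hd e1 e2 e3 e4 o1 o2.
set k := (n1 - y1) * d2 - (n2 - y2) * d1.
set k' := (q1 - p1) * d2 - (q2 - p2) * d1.
set c := d1 * y1 + d2 * y2. set c' := d1 * p1 + d2 * p2.
have i1 : (d1 ^+ 2 + d2 ^+ 2) * ((n1 - y1) * (w2 - y2) - (n2 - y2) * (w1 - y1)) = (c' - c) * k.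
  have -> : c' - c = d1 * (w1 - y1) + d2 * (w2 - y2) by rewrite /c /c'; lra.
  rewrite /k.
  have -> : (d1 ^+ 2 + d2 ^+ 2) * ((n1 - y1) * (w2 - y2) - (n2 - y2) * (w1 - y1)) =
    (d1 * (w1 - y1) + d2 * (w2 - y2)) * ((n1 - y1) * d2 - (n2 - y2) * d1) +
    (d1 * (n1 - y1) + d2 * (n2 - y2)) * (d1 * (w2 - y2) - d2 * (w1 - y1)) by ring.
  by rewrite e1 mul0r addr0.
have i2 : (d1 ^+ 2 + d2 ^+ 2) * ((q1 - p1) * (z2 - p2) - (q2 - p2) * (z1 - p1)) = (c - c') * k'.
  have -> : c - c' = d1 * (z1 - p1) + d2 * (z2 - p2) by rewrite /c /c'; lra.
  rewrite /k'.
  have -> : (d1 ^+ 2 + d2 ^+ 2) * ((q1 - p1) * (z2 - p2) - (q2 - p2) * (z1 - p1)) =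
    (d1 * (z1 - p1) + d2 * (z2 - p2)) * ((q1 - p1) * d2 - (q2 - p2) * d1) +
    (d1 * (q1 - p1) + d2 * (q2 - p2)) * (d1 * (z2 - p2) - d2 * (z1 - p1)) by ring.
  by rewrite e2 mul0r addr0.
have h1 : (c' - c) * k < 0 by rewrite -i1; nra.
have h2 : (c - c') * k' < 0 by rewrite -i2; nra.
have hp : 0 < ((c' - c) * k) * ((c - c') * k') by rewrite nmulr_rgt0.
have e5 : ((c' - c) * k) * ((c - c') * k') = - ((c' - c) ^+ 2 * (k * k')) by ring.
rewrite e5 in hp.
rewrite oppr_gt0 in hp.
rewrite ltNge; apply/negP => hk.
have : 0 <= (c' - c) ^+ 2 * (k * k') by rewrite mulr_ge0 // sqr_ge0.
lra.
Qed.

Lemma edge_right (R : realType) (P s : seq (R * R)) : cw_boundary P s ->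
  forall u x, u \in s -> x \in s -> x != u -> x != nxt (0,0) s u ->
  orient u (nxt (0,0) s u) x < 0.
Proof.
move=> [_ hcw] u x hu hx h1 h2.
have := hcw (index u s); rewrite index_mem => /(_ hu x hx).
by rewrite nth_index //; apply.
Qed.

Lemma three_size (T : eqType) (s : seq T) u v y : u \in s -> v \in s -> y \in s ->
  u != v -> u != y -> v != y -> (3 <= size s)%N.
Proof.
move=> hu hv hy h1 h2 h3.
have : uniq [:: u; v; y] by rewrite /= !inE negb_or h1 h2 h3.
move/uniq_leq_size => /(_ s) /=; apply.
by move=> z; rewrite !inE => /or3P[/eqP->|/eqP->|/eqP->].
Qed.

Lemma localmax (R : realType) (P s : seq (R * R)) (d : R * R) : uniq s -> cw_boundary P s ->
  forall u, u \in s -> dotp d u < dotp d (nxt (0,0) s u) ->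
  dotp d (nxt (0,0) s (nxt (0,0) s u)) < dotp d (nxt (0,0) s u) ->
  forall y, y \in s -> dotp d y <= dotp d (nxt (0,0) s u).
Proof.
move=> us hcw u hu h1 h2 y hy.
set v := nxt (0,0) s u in h1 h2 *.
set w := nxt (0,0) s v in h2.
have hv : v \in s by exact: nxt_mem.
have hw : w \in s by exact: nxt_mem.
rewrite leNgt; apply/negP => h3.
have yu : y != u by apply/eqP => e; move: h1 h3; rewrite e; lra.
have yv : y != v by apply/eqP => e; move: h3; rewrite e; lra.
have yw : y != w by apply/eqP => e; move: h2 h3; rewrite e; lra.
have uv : u != v by apply/eqP => e; move: h1; rewrite e; lra.
have wv : w != v by apply/eqP => e; move: h2; rewrite e; lra.
have wu : w != u.
  apply: nxt2_neq => //.
  apply: (three_size hu hv hy uv); by rewrite eq_sym.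
have o1 := edge_right hcw hu hy yu yv.
have o2 := edge_right hcw hv hy yv yw.
have o3 := edge_right hcw hu hw wu wv.
rewrite -/v -/w in o1 o2 o3.
move: o1 o2 o3 h1 h2 h3; rewrite /orient /dotp => o1 o2 o3 h1 h2 h3.
have := cone o1 o2 o3 h1 h2; lra.
Qed.

Lemma off_edge (R : realType) (s : seq (R * R)) y y' : uniq s -> y \in s -> y' \in s ->
  (3 <= size s)%N -> y != y' ->
  exists z, [/\ z = y' \/ z = nxt (0,0) s y', z != y & z != nxt (0,0) s y].
Proof.
move=> us hy hy' h3 ne.
case: (eqVneq y' (nxt (0,0) s y)) => e; last first.
  by exists y'; split; [left | rewrite eq_sym |].
exists (nxt (0,0) s y'); split; [by right| |].
- by rewrite e; apply: nxt2_neq.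
- by rewrite e; apply: nxt_neq => //; [exact: nxt_mem | exact: ltnW h3].
Qed.

Definition kk (R : realType) (s : seq (R * R)) (d y : R * R) : R :=
  ((nxt (0,0) s y).1 - y.1) * d.2 - ((nxt (0,0) s y).2 - y.2) * d.1.

Lemma dnz (R : realType) (d : R * R) : d != (0,0) -> 0 < d.1 ^+ 2 + d.2 ^+ 2.
Proof.
case: d => a b /= h.
have [ea|ha] := eqVneq a 0.
  have hb : b != 0 by apply/eqP => eb; move: h; rewrite ea eb eqxx.
  rewrite ea.
  have : 0 < b ^+ 2 by rewrite lt0r sqrf_eq0 sqr_ge0 ?hb ?ha.
  have : (0:R) ^+ 2 = 0 by rewrite expr2 mulr0.
  lra.
have : 0 < a ^+ 2 by rewrite lt0r sqrf_eq0 sqr_ge0 ?hb ?ha.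
have : 0 <= b ^+ 2 by rewrite sqr_ge0.
lra.
Qed.

Lemma par_pair (R : realType) (P s : seq (R * R)) (d : R * R) y y' : uniq s -> cw_boundary P s ->
  d != (0,0) -> y \in s -> y' \in s -> (3 <= size s)%N -> y != y' ->
  dotp d (subp (nxt (0,0) s y) y) = 0 -> dotp d (subp (nxt (0,0) s y') y') = 0 ->
  kk s d y * kk s d y' < 0.
Proof.
move=> us hcw hd hy hy' h3 ne e1 e2.
have [w [hw1 hw2 hw3]] := off_edge us hy hy' h3 ne.
have [z [hz1 hz2 hz3]] := off_edge us hy' hy h3 ltac:(by rewrite eq_sym).
have wmem : w \in s by case: hw1 => ->; [|apply: nxt_mem].
have zmem : z \in s by case: hz1 => ->; [|apply: nxt_mem].
have o1 := edge_right hcw hy wmem hw2 hw3.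
have o2 := edge_right hcw hy' zmem hz2 hz3.
have e3 : dotp d (subp z y) = 0.
  by case: hz1 => ->; [rewrite /dotp /subp /=; lra | exact: e1].
have e4 : dotp d (subp w y') = 0.
  by case: hw1 => ->; [rewrite /dotp /subp /=; lra | exact: e2].
move: e1 e2 e3 e4 o1 o2 (dnz hd); rewrite /dotp /subp /orient /kk /=.
move=> e1 e2 e3 e4 o1 o2 hdd.
exact: par2 hdd e1 e2 e3 e4 o1 o2.
Qed.

Lemma par_count (R : realType) (P s : seq (R * R)) (d : R * R) : uniq s -> cw_boundary P s ->
  d != (0,0) -> (count (fun y : R * R => dotp d (subp (nxt (0%R,0%R) s y) y) == 0%R) s <= 2)%N.
Proof.
move=> us hcw hd.
rewrite leqNgt; apply/negP => h.
set p := (fun y : R * R => dotp d (subp (nxt (0%R,0%R) s y) y) == 0%R) in h.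
have : (3 <= size (seq.filter p s))%N by rewrite size_filter.
have ut : uniq (seq.filter p s) by apply: filter_uniq.
have mt : forall z, z \in seq.filter p s -> z \in s /\ dotp d (subp (nxt (0,0) s z) z) = 0.
  by move=> z; rewrite mem_filter => /andP[/eqP ? ?].
case: (seq.filter p s) ut mt => [|y1 [|y2 [|y3 t]]] //= ut mt _.
move: ut; rewrite !inE !negb_or => /and4P[/and3P[n12 n13 _] /andP[n23 _] _ _].
have [m1 q1] := mt y1 ltac:(by rewrite inE eqxx).
have [m2 q2] := mt y2 ltac:(by rewrite !inE eqxx orbT).
have [m3 q3] := mt y3 ltac:(by rewrite !inE eqxx !orbT).
have h3 : (3 <= size s)%N by apply: (three_size m1 m2 m3).
have a12 := par_pair us hcw hd m1 m2 h3 n12 q1 q2.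
have a13 := par_pair us hcw hd m1 m3 h3 n13 q1 q3.
have a23 := par_pair us hcw hd m2 m3 h3 n23 q2 q3.
move: a12 a13 a23; set k1 := kk s d y1; set k2 := kk s d y2; set k3 := kk s d y3.
move=> a12 a13 a23.
have : 0 < (k1 * k2) * (k1 * k3) by rewrite nmulr_rgt0.
have : (k1 * k2) * (k1 * k3) = k1 ^+ 2 * (k2 * k3) by ring.
move=> ->.
have : 0 <= k1 ^+ 2 by rewrite sqr_ge0.
nra.
Qed.


Lemma arc_dir (R : realType) (P s : seq (R * R)) (e a b : R * R) :
  uniq s -> cw_boundary P s -> a \in s -> b \in s ->
  (forall y, y \in s -> dotp e a <= dotp e y) ->
  (forall y, y \in s -> dotp e y <= dotp e b) ->
  (forall x y, x \in s -> y \in s -> x != y -> dotp e x != dotp e y) ->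
  forall x, x \in arc s a b -> dotp e x < dotp e (nxt (0,0) s x).
Proof.
move=> us hcw ha hb hmin hmax hinj.
apply: arc_up => // u hu h1 h2.
have hnu : nxt (0,0) s u \in s by exact: nxt_mem.
have := localmax us hcw hu h1 h2 => hl.
apply/eqP; apply: contraT => ne.
have := hinj _ _ hnu hb ne.
have := hl b hb; have := hmax _ hnu.
move=> p q r.
have : dotp e (nxt (0,0) s u) = dotp e b by apply/le_anti; rewrite p q.
by move/eqP; rewrite (negbTE r).
Qed.

Lemma gen_inj (R : realType) (P s : seq (R * R)) (d : R * R) :
  generic_dir P d -> perm_eq s P ->
  forall x y, x \in s -> y \in s -> x != y -> dotp d x != dotp d y.
Proof.
move=> [_ hg] hp x y hx hy ne.
rewrite !(perm_mem hp) in hx hy.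
have := hg x y hx hy ne; rewrite /dotp /subp /=.
apply: contra => /eqP e; apply/eqP; lra.
Qed.

Definition negd (R : realType) (d : R * R) : R * R := (- d.1, - d.2).

Lemma dot_negd (R : realType) (d x : R * R) : dotp (negd d) x = - dotp d x.
Proof. rewrite /dotp /negd /=; lra. Qed.

Lemma P1_up (R : realType) (P s : seq (R * R)) (d : R * R) :
  uniq s -> cw_boundary P s -> perm_eq s P -> generic_dir P d ->
  forall x, x \in P1 s d -> 0 < dotp d (subp (nxt (0,0) s x) x).
Proof.
move=> us hcw hp hg x.
case: (eqVneq s [::]) => [->|sn]; first by [].
have [ha hmin] := minpt_spec d sn.
have [hb hmax] := maxpt_spec d sn.
move=> hx; have := arc_dir us hcw ha hb hmin hmax (gen_inj hg hp) hx.
rewrite /dotp /subp /=; lra.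
Qed.

Lemma P2_down (R : realType) (P s : seq (R * R)) (d : R * R) :
  uniq s -> cw_boundary P s -> perm_eq s P -> generic_dir P d ->
  forall x, x \in P2 s d -> dotp d (subp (nxt (0,0) s x) x) < 0.
Proof.
move=> us hcw hp hg x.
case: (eqVneq s [::]) => [->|sn]; first by [].
have [ha hmin] := minpt_spec d sn.
have [hb hmax] := maxpt_spec d sn.
have hmin' : forall y, y \in s -> dotp (negd d) (maxpt d s) <= dotp (negd d) y.
  by move=> y hy; rewrite !dot_negd lerN2; apply: hmax.
have hmax' : forall y, y \in s -> dotp (negd d) y <= dotp (negd d) (minpt d s).
  by move=> y hy; rewrite !dot_negd lerN2; apply: hmin.
have hinj : forall x y, x \in s -> y \in s -> x != y -> dotp (negd d) x != dotp (negd d) y.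
  by move=> x' y hx hy ne; rewrite !dot_negd eqr_opp; apply: gen_inj hg hp _ _ hx hy ne.
move=> hx; have := arc_dir us hcw hb ha hmin' hmax' hinj hx.
rewrite !dot_negd /dotp /subp /=; lra.
Qed.


Lemma count_add_le (T : Type) (p q r : pred T) (s : seq T) :
  (forall x, (p x + q x <= r x)%N) -> (count p s + count q s <= count r s)%N.
Proof.
move=> h; elim: s => //= x s IH.
have := h x; lia.
Qed.

Definition up (R : realType) (s : seq (R * R)) (d x : R * R) : bool :=
  0 < dotp d (subp (nxt (0,0) s x) x).

Lemma parts_bound (R : realType) (P s : seq (R * R)) (d1 d2 : R * R) :
  uniq s -> cw_boundary P s -> perm_eq s P -> generic_dir P d1 -> generic_dir P d2 ->
  (size (part_a P s d1 d2) + size (part_d P s d1 d2) <= count (fun x => up s d1 x == up s d2 x) s)%N /\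
  (size (part_b P s d1 d2) + size (part_c P s d1 d2) <= count (fun x => up s d1 x != up s d2 x) s)%N.
Proof.
move=> us hcw hp g1 g2.
have u1 := P1_up us hcw hp g1; have u2 := P1_up us hcw hp g2.
have w1 := P2_down us hcw hp g1; have w2 := P2_down us hcw hp g2.
rewrite /part_a /part_b /part_c /part_d !size_filter !(permP hp).
split; apply: count_add_le => x /=.
- have f1 : x \in P1 s d1 -> up s d1 x by move/u1.
  have f2 : x \in P1 s d2 -> up s d2 x by move/u2.
  have f3 : x \in P2 s d1 -> ~~ up s d1 x by move/w1; rewrite /up -leNgt => /ltW.
  have f4 : x \in P2 s d2 -> ~~ up s d2 x by move/w2; rewrite /up -leNgt => /ltW.
  move: f1 f2 f3 f4.
  case: (x \in P1 s d1); case: (x \in P1 s d2); case: (x \in P2 s d1);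
  case: (x \in P2 s d2); case: (up s d1 x); case: (up s d2 x) => //=;
  by move=> f1 f2 f3 f4; (try have := f1 isT); (try have := f2 isT);
    (try have := f3 isT); (try have := f4 isT).
- have f1 : x \in P1 s d1 -> up s d1 x by move/u1.
  have f2 : x \in P1 s d2 -> up s d2 x by move/u2.
  have f3 : x \in P2 s d1 -> ~~ up s d1 x by move/w1; rewrite /up -leNgt => /ltW.
  have f4 : x \in P2 s d2 -> ~~ up s d2 x by move/w2; rewrite /up -leNgt => /ltW.
  move: f1 f2 f3 f4.
  case: (x \in P1 s d1); case: (x \in P1 s d2); case: (x \in P2 s d1);
  case: (x \in P2 s d2); case: (up s d1 x); case: (up s d2 x) => //=;
  by move=> f1 f2 f3 f4; (try have := f1 isT); (try have := f2 isT);
    (try have := f3 isT); (try have := f4 isT).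
Qed.


Lemma ex_minl (R : realType) (l : seq R) : l != [::] ->
  exists m, m \in l /\ forall x, x \in l -> m <= x.
Proof.
elim: l => // a l IH _.
case: (eqVneq l [::]) => [->|ln].
  by exists a; split => [|x]; rewrite ?mem_seq1 // => /eqP->.
have [m [hm hm']] := IH ln.
case: (leP a m) => h.
  exists a; split; first by rewrite mem_head.
  move=> x; rewrite inE => /orP[/eqP->//|/hm' hx]; exact: le_trans h hx.
exists m; split; first by rewrite inE hm orbT.
move=> x; rewrite inE => /orP[/eqP->|/hm' //]; exact: ltW.
Qed.

Lemma ex_maxl (R : realType) (l : seq R) : l != [::] ->
  exists m, m \in l /\ forall x, x \in l -> x <= m.
Proof.
move=> ln; have : [seq - y | y <- l] != [::] by case: l ln.
move/ex_minl => [m [/mapP[y hy ->] hm]]; exists y; split => // x hx.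
by have := hm (- x) (map_f _ hx); rewrite lerN2.
Qed.

Lemma count_le_split (R : realType) (rs : seq R) v :
  count (fun r => (v <= r)%R) rs = (count (fun r => (v < r)%R) rs + count (fun r => (r == v)%R) rs)%N.
Proof.
elim: rs => //= a l ->.
case: (eqVneq a v) => [->|ne].
  rewrite lexx ltxx /=; lia.
by rewrite le_eqVlt eq_sym (negbTE ne) /= add0n addnA.
Qed.

Lemma select_v (R : realType) (rs : seq R) K : (1 <= K)%N ->
  forall N v, v \in rs -> (K <= count (fun r => (v <= r)%R) rs)%N ->
  (count (fun r => (v < r)%R) rs <= N)%N ->
  exists w, [/\ w \in rs, (K <= count (fun r => (w <= r)%R) rs)%N & (count (fun r => (w < r)%R) rs < K)%N].
Proof.
move=> hK; elim=> [|N IH] v hv h1 h2.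
  by exists v; split => //; lia.
case: (ltnP (count (fun r => (v < r)%R) rs) K) => h3; first by exists v.
have hne : [seq r <- rs | v < r] != [::].
  by rewrite -has_filter has_count; exact: leq_trans hK h3.
have [z [hz hz']] := ex_minl hne.
move: hz; rewrite mem_filter => /andP[vz zr].
have eqc : count (fun r => (z <= r)%R) rs = count (fun r => (v < r)%R) rs.
  apply: eq_in_count => r hr; apply/idP/idP => h.
    exact: lt_le_trans vz h.
  by apply: hz'; rewrite mem_filter h.
have hzc : (0 < count (fun r => (r == z)%R) rs)%N by rewrite -has_count; apply/hasP; exists z.
apply: (IH z zr); first by rewrite eqc.
have := count_le_split rs z; rewrite eqc => E; move: h2 hzc; rewrite E => A B.
rewrite -ltnS; apply: leq_trans _ A; rewrite -addn1 leq_add2l; exact: B.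
Qed.

Lemma select_x (R : realType) (rs B : seq R) K : (1 <= K <= size rs)%N ->
  {subset rs <= B} -> (forall v, (count (fun r => (r == v)%R) rs <= 2)%N) ->
  exists x, x \notin B /\ (K <= count (fun r => (x < r)%R) rs <= K.+1)%N.
Proof.
move=> /andP[hK hKn] sub hmul.
have rn : rs != [::] by apply/eqP => e; move: hKn hK; rewrite e /=; lia.
have [m0 [hm0 hm0']] := ex_minl rn.
have c0 : count (fun r => (m0 <= r)%R) rs = size rs.
  by rewrite -count_predT; apply: eq_in_count => r hr; rewrite hm0'.
have [v [hv h1 h2]] := select_v (N:=size rs) hK hm0 ltac:(by rewrite c0) (count_size _ _).
have hub : (count (fun r => (v <= r)%R) rs <= K.+1)%N.
  rewrite count_le_split -ltnS -addSn; rewrite -addn2; exact: leq_add h2 (hmul v).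
have key : exists x, x \notin B /\ forall r, r \in B -> (x < r) = (v <= r).
  case: (eqVneq [seq b <- B | b < v] [::]) => [e|ne].
    exists (v - 1); split.
      apply/negP => hx.
      have : v - 1 \in [seq b <- B | b < v] by rewrite mem_filter hx; lra.
      by rewrite e.
    move=> r hr; apply/idP/idP => h; last by lra.
    rewrite leNgt; apply/negP => h'.
    have : r \in [seq b <- B | b < v] by rewrite mem_filter hr h'.
    by rewrite e.
  have [m [hm hm']] := ex_maxl ne.
  move: hm; rewrite mem_filter => /andP[mv mB].
  exists ((m + v) / 2); split.
    apply/negP => hx.
    have : (m + v) / 2 <= m by apply: hm'; rewrite mem_filter hx; lra.
    lra.
  move=> r hr; apply/idP/idP => h.
    rewrite leNgt; apply/negP => h'.
    have : r <= m by apply: hm'; rewrite mem_filter hr h'.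
    lra.
  lra.
have [x [hx hx']] := key.
exists x; split => //.
have -> : count (fun r => (x < r)%R) rs = count (fun r => (v <= r)%R) rs.
  by apply: eq_in_count => r hr; apply: hx'; apply: sub.
by rewrite h1 hub.
Qed.


Lemma rot_ok (R : realType) (d : R * R) (x : R) :
  cw_rotation_le_pi d (x * d.1 + d.2, x * d.2 - d.1).
Proof.
set k := Num.sqrt (x ^+ 2 + 1).
have hk2 : k ^+ 2 = x ^+ 2 + 1 by rewrite sqr_sqrtr // addr_ge0 // sqr_ge0.
have hk0 : 0 < k by rewrite sqrtr_gt0; have := sqr_ge0 x; lra.
set c := x / k.
have hkc : k * c = x by rewrite /c mulrCA divff ?mulr1 // gt_eqF.
have hc : -1 <= c <= 1.
  have : c ^+ 2 <= 1.
    have : k ^+ 2 * c ^+ 2 = x ^+ 2 by rewrite -exprMn hkc.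
    have : 0 <= c ^+ 2 by rewrite sqr_ge0.
    nra.
  move=> h; apply/andP; split; nra.
have hs : k * Num.sqrt (1 - c ^+ 2) = 1.
  have -> : 1 - c ^+ 2 = (k^-1) ^+ 2.
    rewrite /c exprMn exprVn hk2.
    have hp : 0 < x ^+ 2 + 1 by have := sqr_ge0 x; lra.
    field; lra.
  rewrite sqrtr_sqr ger0_norm ?invr_ge0 ?ltW // divff // gt_eqF //.
exists (acos c); split.
  by apply/andP; split; [apply: acos_ge0 | apply: acos_lepi].
exists k; split => //.
rewrite sin_acos // acosK; last by rewrite in_itv /=.
congr pair.
  have -> : k * (d.1 * c + d.2 * Num.sqrt (1 - c ^+ 2)) =
    d.1 * (k * c) + d.2 * (k * Num.sqrt (1 - c ^+ 2)) by ring.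
  rewrite hkc hs; ring.
have -> : k * (- d.1 * Num.sqrt (1 - c ^+ 2) + d.2 * c) =
  - d.1 * (k * Num.sqrt (1 - c ^+ 2)) + d.2 * (k * c) by ring.
rewrite hkc hs; ring.
Qed.


Lemma lin_fact (R : realType) (a b x : R) : a != 0 -> x * a + b = a * (x - (- b / a)).
Proof. by move=> ha; field. Qed.

Lemma rho_eq (R : realType) (a b v : R) : a != 0 -> (- b / a == v) = (v * a + b == 0).
Proof.
move=> ha; rewrite lin_fact // mulf_eq0 (negbTE ha) /= subr_eq0 eq_sym //.
Qed.

Lemma rho_neq (R : realType) (a b x : R) : a != 0 -> x != - b / a -> x * a + b != 0.
Proof. by move=> ha hx; rewrite lin_fact // mulf_neq0 // subr_eq0. Qed.

Lemma sign_flip (R : realType) (a b x : R) : a != 0 -> x * a + b != 0 ->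
  ((0 < a) != (0 < x * a + b)) = (x < - b / a).
Proof.
move=> ha hb; move: hb; rewrite lin_fact //.
set r := - b / a => hb.
have hxr : x - r != 0 by apply: contra hb => /eqP ->; rewrite mulr0.
case: (ltgtP 0 a) => h; last by move: ha; rewrite h eqxx.
- rewrite pmulr_rgt0 // subr_gt0 /=.
  case: (ltgtP x r) => //; lra.
- rewrite nmulr_rgt0 // subr_lt0 /=.
  case: (ltgtP x r) => // e; move: hxr; rewrite e subrr eqxx //.
Qed.

Lemma dir_nz (R : realType) (d : R * R) (v : R) : d != (0,0) ->
  (v * d.1 + d.2, v * d.2 - d.1) != (0,0).
Proof.
case: d => a b /= h; apply/negP => /eqP [e1 e2].
have h1 : (v ^+ 2 + 1) * a = 0.
  have -> : (v ^+ 2 + 1) * a = v * (v * a + b) - (v * b - a) by ring.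
  by rewrite e1 e2 mulr0 subr0.
have h2 : (v ^+ 2 + 1) * b = 0.
  have -> : (v ^+ 2 + 1) * b = (v * a + b) + v * (v * b - a) by ring.
  by rewrite e1 e2 mulr0 addr0.
have hp : v ^+ 2 + 1 != 0 by apply: lt0r_neq0; have := sqr_ge0 v; lra.
move/eqP: h1; rewrite mulf_eq0 (negbTE hp) /= => /eqP ea.
move/eqP: h2; rewrite mulf_eq0 (negbTE hp) /= => /eqP eb.
by move: h; rewrite ea eb eqxx.
Qed.

Lemma nat_half (R : realType) (m n : nat) : (2 * m <= n + 2)%N ->
  (m%:R : R) <= n%:R / 2 + 1.
Proof.
move=> h; have : ((2 * m)%:R : R) <= (n + 2)%:R by rewrite ler_nat.
rewrite natrM natrD => h'; lra.
Qed.


Unset Implicit Arguments. Set Strict Implicit.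

Theorem lemma5 (R : realType) (P s : seq (R * R)) (d1 : R * R) :
  convex_point_set P -> cw_boundary P s -> generic_dir P d1 ->
  exists d2 : R * R, generic_dir P d2 /\ cw_rotation_le_pi d1 d2 /\
    balanced P s d1 d2.
Proof.
move=> [uP _] hcw hg1.
have hp : perm_eq s P by case: hcw.
have us : uniq s by rewrite (perm_uniq hp).
have hsz : size s = size P by exact: perm_size hp.
have [d1nz hg1'] := hg1.
case: (leqP (size P) 2) => hn.
  exists d1; split => //; split.
    exists 0; split; first by rewrite lexx pi_ge0.
    exists 1; split => //; rewrite cos0 sin0.
    by case: d1 {hg1 hg1' d1nz} => a b /=; congr pair; ring.
  have [h1 h2] := parts_bound us hcw hp hg1 hg1.
  have c1 := count_size (fun x => up s d1 x == up s d1 x) s.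
  have c2 := count_size (fun x => up s d1 x != up s d1 x) s.
  rewrite /balanced; split; apply: nat_half; lia.
have hn2 : (2 <= size s)%N by rewrite hsz; exact: ltnW.
have hn3 : (3 <= size s)%N by rewrite hsz.
set nx := nxt (0,0) s.
have nxs : forall y, y \in s -> nx y \in s by move=> y hy; apply: nxt_mem.
have alpha_nz : forall y, y \in s -> dotp d1 (subp (nx y) y) != 0.
  move=> y hy; apply: hg1'; rewrite -?(perm_mem hp) ?nxs //.
  by rewrite eq_sym; apply: nxt_neq.
set rho := fun w : R * R => - (d1.2 * w.1 - d1.1 * w.2) / dotp d1 w.
have dot_lin : forall (v : R) (w : R * R), dotp (v * d1.1 + d1.2, v * d1.2 - d1.1) w =
    v * dotp d1 w + (d1.2 * w.1 - d1.1 * w.2).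
  by move=> v w; rewrite /dotp /=; ring.
set rs := [seq rho (subp (nx y) y) | y <- s].
set B := [seq rho (subp q p) | p <- s, q <- s].
have hK : (1 <= (size s)./2 <= size rs)%N.
  rewrite size_map half_gt0 leq_half_double -addnn; apply/andP; split; [exact: hn2 | by rewrite -addnS leq_addr].
have hsub : {subset rs <= B}.
  move=> r /mapP[y hy ->]; rewrite /B.
  exact: (allpairs_f (fun p q => rho (subp q p)) hy (nxs y hy)).
have hmul : forall v, (count (fun r => r == v) rs <= 2)%N.
  move=> v; rewrite count_map.
  have -> : count (preim (fun y => rho (subp (nx y) y)) (fun r => r == v)) s =
     count (fun y : R * R => dotp (v * d1.1 + d1.2, v * d1.2 - d1.1) (subp (nxt (0%R,0%R) s y) y) == 0%R) s.
    apply: eq_in_count => y hy /=.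
    by rewrite /rho rho_eq ?alpha_nz // dot_lin.
  exact: par_count us hcw (dir_nz v d1nz).
have [x [hxB hx]] := select_x hK hsub hmul.
set d2 := (x * d1.1 + d1.2, x * d1.2 - d1.1).
have hg2 : generic_dir P d2.
  split; first exact: dir_nz.
  move=> p q hp' hq' ne; rewrite dot_lin; apply: rho_neq; first exact: hg1'.
  apply: contraNneq hxB => ->; rewrite /B.
  by apply: (allpairs_f (fun p q => rho (subp q p))); rewrite (perm_mem hp).
exists d2; split => //; split; first exact: rot_ok.
have [h1 h2] := parts_bound us hcw hp hg1 hg2.
have hdis : count (fun y => up s d1 y != up s d2 y) s = count (fun r => x < r) rs.
  rewrite count_map; apply: eq_in_count => y hy /=.
  have hb : x * dotp d1 (subp (nx y) y) + (d1.2 * (subp (nx y) y).1 - d1.1 * (subp (nx y) y).2) != 0.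
    rewrite -dot_lin; apply: hg2.2; rewrite -?(perm_mem hp) ?nxs //.
    by rewrite eq_sym; apply: nxt_neq.
  by rewrite /up dot_lin sign_flip ?alpha_nz.
have hagr : (count (fun y => up s d1 y == up s d2 y) s + count (fun y => up s d1 y != up s d2 y) s = size s)%N.
  rewrite -(count_predC (fun y => up s d1 y == up s d2 y)); congr addn.
rewrite hdis in h2 hagr.
have hh := odd_double_half (size s); rewrite -muln2 in hh.
rewrite /balanced -hsz; split; apply: nat_half; lia.
Qed.
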